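(* Let $\alpha,\beta\in[0,1]$ and let $r=w_0\to w_1\to\dots\to w_m$ ($m\in\mathbb{N}\cup\{\infty\}$) be a directed path in $T$ starting at the root, where the decoupled process with parameters $(G,r,T,\alpha,\beta)$ is run. Consider independently the decoupled process with the same $\alpha,\beta$ on the path $\mathcal{P}_m$ with vertices $u_0\to u_1\to\dots\to u_m$, root $u_0$. Then for every $t>0$ and every $0\le j<j'\le m$, $$\Pr[\mathrm{origin}_t(w_j)=\mathrm{origin}_t(w_{j'})]=\Pr[\mathrm{origin}_t(u_j)=\mathrm{origin}_t(u_{j'})],$$ where the left probability refers to the process on $T$ and the right one to the process on $\mathcal{P}_m$.
   Context: Decoupled process. Fix $\alpha,\beta\in[0,1]$, a connected locally finite undirected graph $G$, root $r$, and a BFS spanning tree $T$ of $G$ rooted at $r$, oriented away from $r$, with parent map $p$. Let $Z_0=+1$, $Z_1,Z_2,\dots$ i.i.d. uniform on $\{-1,+1\}$, $Z_\infty=\bot$. Counter $\mathrm{count}_0=1$; $\mathrm{origin}_0(r)=0$, $\mathrm{origin}_0(v)=\infty$ for $v\ne r$; the root always has origin $0$; $g_t(v)=Z_{\mathrm{origin}_t(v)}$. Update from $t$ to $t+1$ (independent choices): if $g_t(v)=g_t(p(v))=\bot$ then $\mathrm{origin}_{t+1}(v)=\infty$; nodes with $g_t(v)=\bot\ne g_t(p(v))$ are processed sequentially in a fixed order: w.p. $1-\alpha$, $\mathrm{origin}_{t+1}(v)=\mathrm{origin}_t(p(v))$; w.p. $\alpha$, $\mathrm{origin}_{t+1}(v)$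 is the current counter value and the counter is then incremented; if $g_t(v)\neq\bot$, $v\ne r$: w.p. $\beta$, $\mathrm{origin}_{t+1}(v)=\mathrm{origin}_t(p(v))$, otherwise unchanged. For $n\in\mathbb{N}\cup\{\infty\}$, $\mathcal{P}_n$ denotes the path $u_0\to u_1\to\dots\to u_n$ rooted at $u_0$ (it is its own BFS tree). *)

(* Defs.v *)
From HB Require Import structures.
From mathcomp Require Import all_boot all_order all_algebra.
From mathcomp Require Import reals.
Set Implicit Arguments. Unset Strict Implicit. Unset Printing Implicit Defensive.
Import Order.TTheory GRing.Theory Num.Theory.
Local Open Scope ring_scope.

Section Dist.
Variable R : nzRingType.
Definition dist (S : Type) := seq (R * S).
Definition dret S (x : S) : dist S := [:: (1, x)].
Definition dbind S T (d : dist S) (f : S -> dist T) : dist T :=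
  flatten [seq [seq (pr.1 * q.1, q.2) | q <- f pr.2] | pr <- d].
Definition dcoin S (q : R) (x y : S) : dist S := [:: (q, x); (1 - q, y)].
Definition dprob S (d : dist S) (E : pred S) : R := \sum_(pr <- d | E pr.2) pr.1.
End Dist.

Section Graph.
Variable V : eqType.
Variable nbrs : V -> seq V.
Definition adj : rel V := fun u v => v \in nbrs u.
Definition undirected := forall u v, (v \in nbrs u) = (u \in nbrs v).
Definition walk (u : V) (s : seq V) (v : V) := path adj u s && (last u s == v).
Definition connected := forall u v, exists s, walk u s v.
Definition isdist (u v : V) (n : nat) :=
  (exists s, size s = n /\ walk u s v) /\ (forall s, walk u s v -> (n <= size s)%N).
(* p is the parent map of a BFS spanning tree of the graph rooted at r
   (the value p r is irrelevant): parent edges are graph edges, and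
   following parents from v reaches r for the first time after exactly
   dist_G(r, v) steps. *)
Definition bfs_tree (r : V) (p : V -> V) :=
  (forall v, v != r -> p v \in nbrs v) /\
  (forall v n, isdist r v n ->
     iter n p v = r /\ forall k, (k < n)%N -> iter k p v != r).
Definition tch (r : V) (p : V -> V) (u : V) : seq V :=
  [seq v <- undup (nbrs u) | (v != r) && (p v == u)].
End Graph.

Section Process.
Variables (R : nzRingType) (alpha beta : R).
Variables (V : eqType) (r : V) (p : V -> V) (ch : V -> seq V) (rk : V -> nat).

(* state: association list of the nodes with finite origin, and the counter;
   nodes absent from the list have origin infinity (None). *)
Definition state := (seq (V * nat) * nat)%type.
Definition orig (S : seq (V * nat)) (v : V) : option nat :=
  ohead [seq x.2 | x <- S & x.1 == v].
Definition addo (o : option nat) (v : V) (S : seq (V * nat)) :=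
  if o is Some k then rcons S (v, k) else S.
Definition frontier (S : seq (V * nat)) : seq V :=
  sort (fun a b => rk a <= rk b)%N
    (undup [seq v <- flatten [seq ch x.1 | x <- S] | orig S v == None]).
Fixpoint procF (S : seq (V * nat)) (fr : seq V) (acc : state) : dist R state :=
  match fr with
  | [::] => dret R acc
  | v :: fr' =>
      dbind (dcoin alpha (rcons acc.1 (v, acc.2), acc.2.+1)
                         (addo (orig S (p v)) v acc.1, acc.2))
            (procF S fr')
  end.
Fixpoint procA (S : seq (V * nat)) (A : seq V) (acc : state) : dist R state :=
  match A with
  | [::] => dret R acc
  | v :: A' =>
      dbind (dcoin beta (addo (orig S (p v)) v acc.1, acc.2)
                        (addo (orig S v) v acc.1, acc.2))
            (procA S A')
  end.
Definition step (s : state) : dist R state :=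
  dbind (procF s.1 (frontier s.1) ([:: (r, 0%N)], s.2))
        (procA s.1 (undup [seq x.1 | x <- s.1 & x.1 != r])).
Definition init : dist R state := dret R ([:: (r, 0%N)], 1%N).
Definition proc (t : nat) : dist R state := iter t (fun d => dbind d step) init.
Definition prob_same_origin (t : nat) (a b : V) : R :=
  dprob (proc t) (fun s => orig s.1 a == orig s.1 b).
End Process.

(* ---------- the path P_m, m in N \cup {oo} (None = oo) ---------- *)
Definition le_m (m : option nat) (k : nat) : bool :=
  if m is Some n then (k <= n)%N else true.
Lemma le_m0 m : le_m m 0.
Proof. by case: m. Qed.
Definition pV (m : option nat) := {k : nat | le_m m k}.
Definition proot (m : option nat) : pV m := exist _ 0%N (le_m0 m).
Definition pv (m : option nat) (k : nat) : pV m := insubd (proot m) k.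
Definition ppar (m : option nat) (x : pV m) : pV m := pv m (val x).-1.
Definition pch (m : option nat) (x : pV m) : seq (pV m) :=
  if le_m m (val x).+1 then [:: pv m (val x).+1] else [::].
Definition prk (m : option nat) (x : pV m) : nat := val x.

(* Main.v *)
Require Import Defs.
From HB Require Import structures.
From mathcomp Require Import all_boot all_order all_algebra.
From mathcomp Require Import reals.
From Stdlib Require Import FunctionalExtensionality.
From Stdlib Require List.
From mathcomp Require Import ring zify.
Import Order.TTheory GRing.Theory Num.Theory.
Set Implicit Arguments. Unset Strict Implicit.

Section DistLemmas.
Local Open Scope ring_scope.
Variable R : realType.

Definition dexp (S : Type) (d : dist R S) (H : S -> R) : R :=
  \sum_(pr <- d) pr.1 * H pr.2.

Lemma dexp_ret S (x : S) H : dexp (dret R x) H = H x.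
Proof. by rewrite /dexp /dret big_seq1 mul1r. Qed.

Lemma dexp_bind S T (d : dist R S) (f : S -> dist R T) H :
  dexp (dbind d f) H = dexp d (fun x => dexp (f x) H).
Proof.
elim: d => [|[q x] d IH]; first by rewrite /dexp /dbind !big_nil.
move: IH; rewrite /dexp /dbind /= big_cat /= => ->; rewrite big_cons /= big_map.
rewrite mulr_sumr; congr (_ + _); apply: eq_bigr => i _ /=; by rewrite mulrA.
Qed.

Lemma dexp_coin S q (x y : S) H : dexp (dcoin q x y) H = q * H x + (1 - q) * H y.
Proof. by rewrite /dexp /dcoin big_cons big_seq1. Qed.

Definition supp S (d : dist R S) := [seq pr.2 | pr <- d].

Lemma dexp_eq_supp S (d : dist R S) H1 H2 :
  (forall x, List.In x (supp d) -> H1 x = H2 x) -> dexp d H1 = dexp d H2.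
Proof.
elim: d => [|[q x] d IH] h; first by rewrite /dexp !big_nil.
rewrite /dexp !big_cons /= h /=; last by left.
by congr (_ + _); apply: IH => y hy; apply: h; right.
Qed.

Lemma supp_bind S T (d : dist R S) (f : S -> dist R T) y :
  List.In y (supp (dbind d f)) -> exists x, List.In x (supp d) /\ List.In y (supp (f x)).
Proof.
elim: d => [|[q x] d IH] //=.
rewrite {1}/supp /dbind /= map_cat -/(dbind d f) => h0; case: (List.in_app_or _ _ _ h0) => h.
  exists x; split; first by left. move: h; rewrite -map_comp /supp.
  by congr List.In; apply: eq_map => -[].
have [z [h1 h2]] := IH h. by exists z; split => //; right.
Qed.

Lemma dexp_sub S (d : dist R S) H1 H2 : dexp d (fun x => H1 x - H2 x) = dexp d H1 - dexp d H2.
Proof. rewrite /dexp -sumrB; apply: eq_bigr => i _; by rewrite mulrBr. Qed.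

Fixpoint gfold (I A : Type) (q : R) (f g : I -> A -> A) (l : seq I) (a : A) : dist R A :=
  match l with
  | [::] => dret R a
  | v :: l' => dbind (dcoin q (f v a) (g v a)) (gfold q f g l')
  end.

Lemma dexp_gfold_cons I A q (f g : I -> A -> A) v l a H :
  dexp (gfold q f g (v :: l) a) H =
  q * dexp (gfold q f g l (f v a)) H + (1 - q) * dexp (gfold q f g l (g v a)) H.
Proof. by rewrite /= dexp_bind dexp_coin. Qed.

Lemma gfold_transport I A B q (f g : I -> A -> A) (f' g' : I -> B -> B)
   (Phi : A -> B) (Inv : A -> Prop) (J : A -> R) (K : B -> R) :
  (forall v a, Inv a -> Inv (f v a) /\ Inv (g v a) /\
        Phi (f v a) = f' v (Phi a) /\ Phi (g v a) = g' v (Phi a)) ->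
  (forall a, Inv a -> J a = K (Phi a)) ->
  forall l a, Inv a -> dexp (gfold q f g l a) J = dexp (gfold q f' g' l (Phi a)) K.
Proof.
move=> hst hleaf; elim=> [|v l IH] a ha; first by rewrite /= !dexp_ret hleaf.
have [h1 [h2 [h3 h4]]] := hst v a ha.
by rewrite !dexp_gfold_cons IH // IH // h3 h4.
Qed.

Lemma gfold_inv I A q (f g : I -> A -> A) (Inv : A -> Prop) :
  (forall v a, Inv a -> Inv (f v a) /\ Inv (g v a)) ->
  forall l a, Inv a -> forall y, List.In y (supp (gfold q f g l a)) -> Inv y.
Proof.
move=> hst; elim=> [|v l IH] a ha y /=; first by case=> // <-.
move=> h0; have [x [hx hy]] := supp_bind h0; move: hx hy => /= [<-|[<-|//]] hy; apply: IH hy; by have [] := hst v a ha.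
Qed.

Lemma gfold_collapse I A q (f g : I -> A -> A) (P : pred I) :
  (forall v a, ~~ P v -> f v a = a /\ g v a = a) ->
  forall l a H, dexp (gfold q f g l a) H = dexp (gfold q f g (filter P l) a) H.
Proof.
move=> hnp; elim=> [|v l IH] a H //.
rewrite [filter _ _]/=. case: ifP => hv; first by rewrite !dexp_gfold_cons !IH.
rewrite dexp_gfold_cons. have [-> ->] := hnp v a (negbT hv).
rewrite !IH; by rewrite -mulrDl addrC subrK mul1r.
Qed.

Lemma gfold_map I J0 A q (f g : I -> A -> A) (f' g' : J0 -> A -> A) (h : I -> J0) :
  forall l, (forall v a, List.In v l -> f v a = f' (h v) a /\ g v a = g' (h v) a) ->
  forall a H, dexp (gfold q f g l a) H = dexp (gfold q f' g' (map h l) a) H.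
Proof.
elim=> [|v l IH] hl a H //.
rewrite [map _ _]/= !dexp_gfold_cons. have [-> ->] := hl v a (or_introl erefl).
by rewrite !IH // => u b hu; apply: hl; right.
Qed.

Lemma gfold_rem (I : eqType) A q (f g : I -> A -> A) :
  (forall x y a, x != y -> f x (f y a) = f y (f x a) /\ f x (g y a) = g y (f x a)
      /\ g x (f y a) = f y (g x a) /\ g x (g y a) = g y (g x a)) ->
  forall l x, x \in l -> forall a H,
  dexp (gfold q f g l a) H =
  q * dexp (gfold q f g (rem x l) (f x a)) H + (1 - q) * dexp (gfold q f g (rem x l) (g x a)) H.
Proof.
move=> hc; elim=> [|y l IH] x //; rewrite inE => hx a H.
rewrite [rem _ _]/=; case: eqP => [->|/eqP nxy]; first by rewrite dexp_gfold_cons.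
have hxl : x \in l by move: hx; rewrite eq_sym (negbTE nxy).
have nxy' : x != y by rewrite eq_sym.
rewrite !dexp_gfold_cons !(IH x hxl).
have [h1 [h2 [h3 h4]]] := hc x y a nxy'.
rewrite h1 h2 h3 h4. ring.
Qed.

Lemma gfold_perm (I : eqType) A q (f g : I -> A -> A) :
  (forall x y a, x != y -> f x (f y a) = f y (f x a) /\ f x (g y a) = g y (f x a)
      /\ g x (f y a) = f y (g x a) /\ g x (g y a) = g y (g x a)) ->
  forall l1 l2, perm_eq l1 l2 -> forall a H,
  dexp (gfold q f g l1 a) H = dexp (gfold q f g l2 a) H.
Proof.
move=> hc; elim=> [|x l1 IH] l2 hp a H.
  by move: hp; rewrite perm_sym => /perm_nilP ->.
have hx : x \in l2 by rewrite -(perm_mem hp) mem_head.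
rewrite (gfold_rem q hc hx) dexp_gfold_cons.
have hp' : perm_eq l1 (rem x l2).
  by rewrite -(perm_cons x); apply: perm_trans hp _; apply: perm_to_rem.
by rewrite !(IH _ hp').
Qed.

End DistLemmas.



Section OrigLemmas.
Variable V : eqType.

Lemma orig_cons (S : seq (V * nat)) u k v :
  orig ((u, k) :: S) v = if u == v then Some k else orig S v.
Proof. by rewrite /orig /=; case: ifP. Qed.

Lemma orig_rcons (S : seq (V * nat)) u k v :
  orig (rcons S (u, k)) v = if orig S v is Some y then Some y else if u == v then Some k else None.
Proof.
elim: S => [|[a b] S IH]; first by rewrite /orig /=; case: ifP.
rewrite rcons_cons !orig_cons IH; by case: ifP.
Qed.

Lemma orig_addo (S : seq (V * nat)) o u v :
  orig (addo o u S) v = if orig S v is Some y then Some y else if u == v then o else None.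
Proof.
case: o => [k|] /=; first exact: orig_rcons.
by case: (orig S v) => //; case: ifP.
Qed.

Lemma orig_key (S : seq (V * nat)) v : (orig S v != None) = (v \in [seq x.1 | x <- S]).
Proof.
elim: S => [|[a b] S IH] //=; rewrite orig_cons inE; case: (a =P v) => [->|hav]; first by rewrite eqxx.
rewrite IH; case: (v =P a) => // hva; by case: hav.
Qed.
End OrigLemmas.

Section Lst.
Variable N : nat.
Definition lst (P : pred nat) := find P (iota 0 N.+1).

Lemma lst_spec (P : pred nat) b : P b -> b <= N -> (lst P <= b)%N /\ P (lst P).
Proof.
move=> hb hbN.
have hh : has P (iota 0 N.+1) by apply/hasP; exists b => //; rewrite mem_iota.
have hlt : (lst P < N.+1)%N by move: hh; rewrite has_find size_iota.
split.
  rewrite leqNgt; apply/negP => hlt2.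
  have := before_find 0 hlt2; rewrite nth_iota; last by lia.
  by rewrite add0n hb.
by have := nth_find 0 hh; rewrite nth_iota // add0n.
Qed.

Lemma lst_leN (P : pred nat) b : P b -> b <= N -> (lst P <= N)%N.
Proof. move=> hb hbN; have [h _] := lst_spec hb hbN; lia. Qed.

Lemma lst_eq (P1 P2 : pred nat) : (forall c, c <= N -> P1 c = P2 c) -> lst P1 = lst P2.
Proof. move=> h; apply: eq_in_find => c; rewrite mem_iota => /andP [_ hc]; apply: h; lia. Qed.

Lemma lst_unique (P : pred nat) b : P b -> b <= N -> (forall c, c <= N -> P c -> c = b) -> lst P = b.
Proof.
move=> hb hbN hu; have [h1 h2] := lst_spec hb hbN; apply: hu => //; lia.
Qed.

Lemma lst_has (P : pred nat) : has P (iota 0 N.+1) -> (lst P <= N)%N /\ P (lst P).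
Proof. move/hasP => [b]; rewrite mem_iota => /andP [_ hb] hP.
have hbN : (b <= N)%N by lia. have [h1 h2] := lst_spec hP hbN; split => //; lia. Qed.

Lemma lst_nhas (P : pred nat) : ~~ has P (iota 0 N.+1) -> lst P = N.+1.
Proof. by move=> h; rewrite /lst; move: h; rewrite has_find size_iota -leqNgt => h;
  apply/eqP; rewrite eqn_leq h; have := find_size P (iota 0 N.+1); rewrite size_iota => ->. Qed.
End Lst.

Section CodeWorld.
Variable R : realType. Variables alpha beta : R. Variable N : nat.
Definition code := option (nat + nat)%type.
Definition env := nat -> code.
Definition updc (a : nat) (c : code) (phi : env) : env :=
  fun b => if (b == a) && (phi b == None) then c else phi b.
Definition canon (phi : env) : nat -> option nat :=
  fun b => if (b <= N)%N then omap (fun _ => lst N (fun c => phi c == phi b)) (phi b) else None.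
Definition FF (a : nat) := updc a (Some (inr a)).
Definition GF (psi : nat -> option nat) (a : nat) := updc a (omap inl (psi a.-1)).
Definition GA (psi : nat -> option nat) (a : nat) := updc a (omap inl (psi a)).
Definition frI (psi : nat -> option nat) := [seq a <- iota 1 N | (psi a == None) && (psi a.-1 != None)].
Definition AI (psi : nat -> option nat) := [seq a <- iota 1 N | psi a != None].
Definition phi0 : env := fun b => if b == 0%N then Some (inl 0%N) else None.
Definition psi0 : nat -> option nat := fun b => if b == 0%N then Some 0%N else None.
Definition Kd (psi : nat -> option nat) : dist R (nat -> option nat) :=
  dbind (gfold alpha FF (GF psi) (frI psi) phi0)
        (fun phi => dbind (gfold beta (GF psi) (GA psi) (AI psi) phi) (fun phi' => dret R (canon phi'))).
Definition Q t := iter t (fun d => dbind d Kd) (dret R psi0).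

Lemma updc_comm a b c d phi : a != b -> updc a c (updc b d phi) = updc b d (updc a c phi).
Proof.
move=> hab; apply: functional_extensionality => z; rewrite /updc.
case: (z =P a) => [hza|hza] /=; case: (z =P b) => [hzb|hzb] //=.
by move: hab; rewrite -hza -hzb eqxx.
Qed.

Lemma comm_hyp (c1 c2 : nat -> code) :
  forall x y phi, x != y ->
  let f := fun x => updc x (c1 x) in let g := fun x => updc x (c2 x) in
  f x (f y phi) = f y (f x phi) /\ f x (g y phi) = g y (f x phi)
      /\ g x (f y phi) = f y (g x phi) /\ g x (g y phi) = g y (g x phi).
Proof. by move=> x y phi hxy f g; rewrite /f /g; split; [|split; [|split]]; apply: updc_comm. Qed.
End CodeWorld.


Section Struct.
Variable V : eqType.
Variables (r : V) (p : V -> V) (ch : V -> seq V) (rk : V -> nat).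
Variable w : nat -> V. Variable N : nat.
Hypothesis hw0 : w 0 = r.
Hypothesis hw1 : forall a, (0 < a <= N)%N -> w a != r /\ p (w a) = w a.-1.
Hypothesis hch : forall a, (0 < a <= N)%N -> w a \in ch (w a.-1).
Hypothesis hch2 : forall x v, v \in ch x -> v != r /\ p v = x.

Lemma iter_w k b : (k <= b)%N -> (b <= N)%N -> iter k p (w b) = w (b - k).
Proof.
elim: k => [|k IH] hk hb; first by rewrite subn0.
rewrite iterS IH; [|lia|lia].
have [_ ->] := hw1 (a := b - k) ltac:(lia). congr w; lia.
Qed.

Lemma winj a b : (a <= N)%N -> (b <= N)%N -> w a = w b -> a = b.
Proof.
move=> ha hb.
wlog hab : a b ha hb / (a <= b)%N.
  move=> hw; case: (leqP a b) => h; first exact: hw.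
  by move=> e; symmetry; apply: hw => //; lia.
move=> e; case: (eqVneq a b) => [//|hne]. have hlt : (a < b)%N by lia.
have e1 := iter_w (k := a) (b := a) (leqnn a) ha.
have e2 := iter_w (k := a) (b := b) hab hb.
rewrite e subnn hw0 in e1; rewrite e1 in e2.
have [h _] := hw1 (a := b - a) ltac:(lia).
by move: h; rewrite -e2 eqxx.
Qed.

Definition ispath v := has (fun b => w b == v) (iota 0 N.+1).
Definition idx v := lst N (fun b => w b == v).

Lemma ispath_w a : (a <= N)%N -> ispath (w a).
Proof. by move=> ha; apply/hasP; exists a; rewrite ?mem_iota //; lia. Qed.

Lemma idx_w a : (a <= N)%N -> idx (w a) = a.
Proof.
move=> ha; apply: lst_unique; [exact: eqxx| exact: ha|].
by move=> c hc /eqP e; apply: winj.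
Qed.

Lemma idxP v : ispath v -> (idx v <= N)%N /\ w (idx v) = v.
Proof. by move=> h; have [h1 /eqP h2] := lst_has h. Qed.

Definition Psi (S : seq (V * nat)) : nat -> option nat :=
  fun b => if (b <= N)%N then omap (fun x => lst N (fun c => orig S (w c) == Some x)) (orig S (w b)) else None.

Lemma Psi_None S b : (b <= N)%N -> (Psi S b == None) = (orig S (w b) == None).
Proof. by move=> hb; rewrite /Psi hb; case: (orig S (w b)). Qed.

Lemma Psi_eq S j j' : (j <= N)%N -> (j' <= N)%N ->
  (orig S (w j) == orig S (w j')) = (Psi S j == Psi S j').
Proof.
move=> hj hj'; rewrite /Psi hj hj'.
case ej: (orig S (w j)) => [x|]; case ej': (orig S (w j')) => [y|] //=.
apply/eqP/eqP => [[->]//|[] e].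
have [_ h1] := lst_spec (P := fun c => orig S (w c) == Some x) (b := j) ltac:(by rewrite /= ej) hj.
have [_ h2] := lst_spec (P := fun c => orig S (w c) == Some y) (b := j') ltac:(by rewrite /= ej') hj'.
by move: h1 h2; rewrite e => /eqP -> /eqP [->].
Qed.

Section Codes.
Variables (s2 : nat) (S : seq (V * nat)).

Definition codeOf (l : seq (V * nat)) (x : nat) : nat + nat :=
  if (x < s2)%N then
    inl (if has (fun c => orig S (w c) == Some x) (iota 0 N.+1)
         then lst N (fun c => orig S (w c) == Some x) else (N.+1 + x)%N)
  else inr (lst N (fun c => orig l (w c) == Some x)).

Definition Phi (l : seq (V * nat)) : env :=
  fun b => if (b <= N)%N then omap (codeOf l) (orig l (w b)) else None.

Lemma Phi_None l b : (b <= N)%N -> (Phi l b == None) = (orig l (w b) == None).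
Proof. by move=> hb; rewrite /Phi hb; case: (orig l (w b)). Qed.

Lemma codeOf_inj l b c x y : (b <= N)%N -> (c <= N)%N ->
  orig l (w b) = Some x -> orig l (w c) = Some y -> codeOf l y = codeOf l x -> y = x.
Proof.
move=> hb hc ex ey; rewrite /codeOf.
case hy: (y < s2)%N; case hx: (x < s2)%N => e; try discriminate e.
- move: e; case hhy: (has (fun c => orig S (w c) == Some y) (iota 0 N.+1));
  case hhx: (has (fun c => orig S (w c) == Some x) (iota 0 N.+1)).
  + move=> [e]; have [_ h1] := lst_has hhy; have [_ h2] := lst_has hhx.
    move: h1 h2; rewrite /= e => /eqP -> /eqP [] //.
  + move=> [e]; have [h1 _] := lst_has hhy; lia.
  + move=> [e]; have [h1 _] := lst_has hhx; lia.
  + move=> [e]; lia.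
- case: e => e.
  have [_ h1] := lst_spec (P := fun c => orig l (w c) == Some y) (b := c) ltac:(by rewrite /= ey) hc.
  have [_ h2] := lst_spec (P := fun c => orig l (w c) == Some x) (b := b) ltac:(by rewrite /= ex) hb.
  move: h1 h2; rewrite /= e => /eqP -> /eqP [] //.
Qed.

Lemma psi_canon l : Psi l = canon N (Phi l).
Proof.
apply: functional_extensionality => b; rewrite /Psi /canon.
case: ifP => hb //.
have -> : Phi l b = omap (codeOf l) (orig l (w b)) by rewrite /Phi hb.
case eb: (orig l (w b)) => [x|] //=.
congr Some; apply: lst_eq => c hc.
rewrite /Phi hc; case ec: (orig l (w c)) => [y|] //=.
apply/eqP/eqP => [[->]//|[] e]; congr Some; exact: (codeOf_inj hb hc eb ec e).
Qed.

Lemma Phi_add l v y :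
  (forall x, y = Some x -> (s2 <= x)%N -> forall c, (c <= N)%N -> orig l (w c) != Some x) ->
  Phi (addo y v l) = fun b => if (b <= N)%N && (w b == v) && (Phi l b == None)
                              then omap (codeOf (addo y v l)) y else Phi l b.
Proof.
move=> hy; apply: functional_extensionality => b.
case: (leqP b N) => hb /=; last by rewrite /Phi leqNgt hb.
rewrite Phi_None // /Phi hb orig_addo.
case eb: (orig l (w b)) => [z|] /=.
  rewrite (_ : (Some z == None) = false) // andbF.
  congr Some; rewrite /codeOf; case: ifP => hz //.
  congr inr; apply: lst_eq => c hc; rewrite orig_addo.
  case ec: (orig l (w c)) => [u|] //.
  case: ifP => // _; case: y hy => [k|] hy //.
  apply/eqP => -[ek]; rewrite ek in hy.
  have hz' : (s2 <= z)%N by rewrite leqNgt hz.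
  by move: (hy z erefl hz' b hb); rewrite eb eqxx.
by rewrite eq_sym andbT; case: ifP.
Qed.
End Codes.

Definition FV (tf : nat -> env -> env) (v : V) (phi : env) := if ispath v then tf (idx v) phi else phi.

Lemma FV_eq (cc : nat -> code) code0 phi v :
  (forall b, (N < b)%N -> phi b = None) ->
  (forall b, (b <= N)%N -> w b = v -> phi b = None -> cc b = code0) ->
  FV (fun a => updc a (cc a)) v phi =
  fun b => if (b <= N)%N && (w b == v) && (phi b == None) then code0 else phi b.
Proof.
move=> hN hc; apply: functional_extensionality => b; rewrite /FV.
case: ifP => hp.
  have [hi hwi] := idxP hp; rewrite /updc.
  case: (b =P idx v) => [->|hbi] /=.
    rewrite hi hwi eqxx /=; case: eqP => // /eqP e; apply: hc => //; exact/eqP.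
  case: (leqP b N) => hb //=; case: (w b =P v) => //= e.
  by case: hbi; apply: winj => //; rewrite e hwi.
case: (leqP b N) => hb //=; case: (w b =P v) => //= e.
by move: hp; rewrite -e ispath_w.
Qed.

Definition Jst s2 (acc : state V) :=
  orig acc.1 r = Some 0%N /\ (forall v x, orig acc.1 v = Some x -> (x < acc.2)%N) /\ (s2 <= acc.2)%N.
Definition InvS (s : state V) :=
  orig s.1 r = Some 0%N /\ (forall v x, orig s.1 v = Some x -> (x < s.2)%N).

Definition fFv (v : V) (acc : state V) : state V := (rcons acc.1 (v, acc.2), acc.2.+1).
Definition gFv (S : seq (V * nat)) (v : V) (acc : state V) : state V :=
  (addo (orig S (p v)) v acc.1, acc.2).
Definition gAv (S : seq (V * nat)) (v : V) (acc : state V) : state V :=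
  (addo (orig S v) v acc.1, acc.2).

Lemma Phi_big s2 S l b : (N < b)%N -> Phi s2 S l b = None.
Proof. by move=> hb; rewrite /Phi leqNgt hb. Qed.

Lemma code_S s2 S l c : InvS (S, s2) -> (c <= N)%N ->
  omap (codeOf s2 S l) (orig S (w c)) = omap inl (Psi S c).
Proof.
move=> [h0 hv] hc; rewrite /Psi hc; case e: (orig S (w c)) => [x|] //=.
rewrite /codeOf (hv _ _ e).
have hh : has (fun c => orig S (w c) == Some x) (iota 0 N.+1).
  by apply/hasP; exists c; rewrite ?mem_iota ?e //; lia.
by rewrite hh.
Qed.

Lemma trans_add s2 S (cc : nat -> code) v l k (y : option nat) :
  Jst s2 (l, k) -> (forall x, y = Some x -> (x < s2)%N) ->
  (forall b, (b <= N)%N -> w b = v -> orig l (w b) = None -> (0 < b)%N ->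
     omap (codeOf s2 S (addo y v l)) y = cc b) ->
  Jst s2 (addo y v l, k) /\
  Phi s2 S (addo y v l) = FV (fun a => updc a (cc a)) v (Phi s2 S l).
Proof.
move=> [h0 [hv hk]] hy hc; simpl in h0, hv, hk; split.
  split; first by rewrite orig_addo /= h0.
  split => // u x /=; rewrite orig_addo; case e: (orig l u) => [z|].
    by move=> [<-]; apply: (hv u).
  case: ifP => // _ /hy hx; lia.
rewrite Phi_add; last by move=> x /hy hx hx2; lia.
rewrite (FV_eq (cc := cc) (code0 := omap (codeOf s2 S (addo y v l)) y)) //.
  by move=> b hb; apply: Phi_big.
move=> b hb hwb; rewrite /Phi hb; case e: (orig l (w b)) => [z|] // _.
symmetry; apply: hc => //; case: b hb hwb e => // hb hwb e.
by move: e; rewrite hw0 h0.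
Qed.

Lemma trans_fF s2 S v acc : Jst s2 acc -> Jst s2 (fFv v acc) /\
  Phi s2 S (fFv v acc).1 = FV FF v (Phi s2 S acc.1).
Proof.
case: acc => l k [h0 [hv hk]]; simpl in h0, hv, hk; split.
  split; first by rewrite /= orig_rcons h0.
  split => [u x|] /=; last by lia.
  rewrite orig_rcons; case e: (orig l u) => [z|].
    by move=> [<-]; have := hv u z e; lia.
  by case: ifP => // _ [<-].
rewrite /fFv /=.
change (rcons l (v, k)) with (addo (Some k) v l).
rewrite Phi_add; last first.
  move=> x [<-] _ c hc; apply/eqP => e; have := hv _ _ e; lia.
rewrite /FF (FV_eq (cc := fun a => Some (inr a)) (code0 := omap (codeOf s2 S (addo (Some k) v l)) (Some k))) //.
  by move=> b hb; apply: Phi_big.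
move=> b hb hwb; rewrite /Phi hb; case e: (orig l (w b)) => [z|] // _ /=.
rewrite /codeOf (_ : (k < s2)%N = false); last by apply/negbTE; rewrite -leqNgt.
congr (Some (inr _)); symmetry; apply: lst_unique => //.
  by rewrite /= orig_rcons e hwb eqxx.
move=> c hc /=; rewrite orig_rcons; case ec: (orig l (w c)) => [u|].
  move=> /eqP [eu]; have := hv _ _ ec; lia.
case: (v =P w c) => // evc _; apply: winj => //; by rewrite hwb evc.
Qed.

Lemma trans_gF s2 S v acc : InvS (S, s2) -> Jst s2 acc -> Jst s2 (gFv S v acc) /\
  Phi s2 S (gFv S v acc).1 = FV (GF (Psi S)) v (Phi s2 S acc.1).
Proof.
move=> hS; case: acc => l k hJ; rewrite /gFv /GF /=.
apply: (trans_add (cc := fun a => omap inl (Psi S a.-1))) => //.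
  by move=> x e; case: hS => _ h; apply: (h _ _ e).
move=> b hb hwb _ hb0.
have [_ e] := hw1 (a := b) ltac:(lia).
rewrite -hwb e code_S //; lia.
Qed.

Lemma trans_gA s2 S v acc : InvS (S, s2) -> Jst s2 acc -> Jst s2 (gAv S v acc) /\
  Phi s2 S (gAv S v acc).1 = FV (GA (Psi S)) v (Phi s2 S acc.1).
Proof.
move=> hS; case: acc => l k hJ; rewrite /gAv /GA /=.
apply: (trans_add (cc := fun a => omap inl (Psi S a))) => //.
  by move=> x e; case: hS => _ h; apply: (h _ _ e).
move=> b hb hwb _ hb0.
by rewrite -hwb code_S.
Qed.

Lemma procF_eq (R : realType) (alpha : R) S fr acc :
  procF alpha p S fr acc = gfold alpha fFv (gFv S) fr acc.
Proof.
elim: fr acc => [|v fr IH] acc //=.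
congr (dbind _ _); apply: functional_extensionality => x; exact: IH.
Qed.

Lemma procA_eq (R : realType) (beta : R) S A acc :
  procA beta p S A acc = gfold beta (gFv S) (gAv S) A acc.
Proof.
elim: A acc => [|v A IH] acc //=.
congr (dbind _ _); apply: functional_extensionality => x; exact: IH.
Qed.

Lemma In_mem (T : eqType) (x : T) s : List.In x s -> x \in s.
Proof. elim: s => //= y s IH [->|h]; rewrite inE ?eqxx //; by rewrite IH ?orbT. Qed.

Lemma reduce (R : realType) (q : R) (tf1 tf2 : nat -> env -> env) (l : seq V) (l' : seq nat) phi H :
  (forall x y a, x != y -> tf1 x (tf1 y a) = tf1 y (tf1 x a) /\ tf1 x (tf2 y a) = tf2 y (tf1 x a)
      /\ tf2 x (tf1 y a) = tf1 y (tf2 x a) /\ tf2 x (tf2 y a) = tf2 y (tf2 x a)) ->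
  perm_eq (map idx (filter ispath l)) l' ->
  dexp (gfold q (FV tf1) (FV tf2) l phi) H = dexp (gfold q tf1 tf2 l' phi) H.
Proof.
move=> hc hp.
rewrite (@gfold_collapse _ _ _ q (FV tf1) (FV tf2) ispath); last first.
  by move=> v a /negbTE hv; rewrite /FV hv.
rewrite (@gfold_map _ _ _ _ q (FV tf1) (FV tf2) tf1 tf2 idx); last first.
  move=> v a /In_mem; rewrite mem_filter => /andP [hv _]; by rewrite /FV hv.
exact: (gfold_perm q hc hp phi H).
Qed.

Lemma perm_fr S : perm_eq (map idx (filter ispath (frontier ch rk S))) (frI N (Psi S)).
Proof.
apply: uniq_perm.
- rewrite map_inj_in_uniq; first by rewrite filter_uniq // sort_uniq undup_uniq.
  move=> u v; rewrite !mem_filter => /andP [hu _] /andP [hv _] e.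
  have [_ h1] := idxP hu; have [_ h2] := idxP hv. by rewrite -h1 -h2 e.
- by rewrite filter_uniq // iota_uniq.
move=> a; apply/mapP/idP.
- case=> v; rewrite mem_filter => /andP [hp hv] ->.
  have [hi hwi] := idxP hp.
  move: hv; rewrite /frontier mem_sort mem_undup mem_filter => /andP [hN /flattenP [s hs hvs]].
  move: hs => /mapP [x hx es]; rewrite es in hvs.
  have [hvr hpv] := hch2 hvs.
  have hi0 : (0 < idx v)%N.
    case: (idx v) hwi => // e; by move: hvr; rewrite -e hw0 eqxx.
  rewrite mem_filter mem_iota Psi_None // hwi hN /=.
  have hiN : ((idx v).-1 <= N)%N by lia.
  rewrite (Psi_None S hiN); have [_ e] := hw1 (a := idx v) ltac:(lia).
  rewrite -e hwi hpv orig_key; apply/andP; split; first exact: map_f.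
  lia.
- rewrite mem_filter mem_iota => /andP [/andP [h1 h2] hmem].
  have ha0 : (0 < a)%N by lia.
  have haN : (a <= N)%N by lia.
  exists (w a); last by rewrite idx_w.
  rewrite mem_filter ispath_w //= /frontier mem_sort mem_undup mem_filter.
  rewrite -Psi_None // h1 /=.
  have haN' : (a.-1 <= N)%N by lia.
  move: h2; rewrite Psi_None // orig_key => /mapP [x hx ex].
  apply/flattenP; exists (ch x.1); first by apply/mapP; exists x.
  rewrite -ex; exact: hch.
Qed.

Lemma perm_A S : perm_eq (map idx (filter ispath (undup [seq x.1 | x <- S & x.1 != r]))) (AI N (Psi S)).
Proof.
apply: uniq_perm.
- rewrite map_inj_in_uniq; first by rewrite filter_uniq // undup_uniq.
  move=> u v; rewrite !mem_filter => /andP [hu _] /andP [hv _] e.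
  have [_ h1] := idxP hu; have [_ h2] := idxP hv. by rewrite -h1 -h2 e.
- by rewrite filter_uniq // iota_uniq.
move=> a; apply/mapP/idP.
- case=> v; rewrite mem_filter => /andP [hp hv] ->.
  have [hi hwi] := idxP hp.
  move: hv; rewrite mem_undup => /mapP [x]; rewrite mem_filter => /andP [hxr hx] ev.
  have hi0 : (0 < idx v)%N.
    case: (idx v) hwi => // e; by move: hxr; rewrite -ev -e hw0 eqxx.
  rewrite mem_filter mem_iota Psi_None // hwi orig_key ev map_f //= -ev; lia.
- rewrite mem_filter mem_iota => /andP [h1 hmem].
  have ha0 : (0 < a)%N by lia.
  have haN : (a <= N)%N by lia.
  exists (w a); last by rewrite idx_w.
  rewrite mem_filter ispath_w //= mem_undup.
  move: h1; rewrite Psi_None // orig_key => /mapP [x hx ex].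
  apply/mapP; exists x => //; rewrite mem_filter hx andbT -ex.
  by have [] := hw1 (a := a) ltac:(lia).
Qed.

Lemma Phi_init s2 S : InvS (S, s2) -> Phi s2 S [:: (r, 0%N)] = phi0.
Proof.
move=> [h0 hv]; apply: functional_extensionality => b; rewrite /Phi /phi0.
case: (leqP b N) => hb; last by case: b hb.
rewrite orig_cons /orig /=.
case: b hb => [|b] hb.
  rewrite hw0 eqxx /= /codeOf (hv _ _ h0).
  have hh : has (fun c => orig S (w c) == Some 0%N) (iota 0 N.+1).
    by apply/hasP; exists 0%N; rewrite ?mem_iota ?hw0 ?h0 //.
  rewrite hh; congr (Some (inl _)).
  have [] := lst_spec (N := N) (P := fun c => orig S (w c) == Some 0%N) (b := 0%N) ltac:(by rewrite /= hw0 h0) (leq0n N).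
  by rewrite leqn0 => /eqP.
have [hr _] := hw1 (a := b.+1) ltac:(lia).
by rewrite eq_sym (negbTE hr).
Qed.

Lemma Psi_init : Psi [:: (r, 0%N)] = psi0.
Proof.
apply: functional_extensionality => b; rewrite /Psi /psi0.
case: (leqP b N) => hb; last by case: b hb.
rewrite orig_cons /orig /=.
case: b hb => [|b] hb.
  rewrite hw0 eqxx /=; congr Some.
  have [] := lst_spec (N := N) (P := fun c => orig [:: (r, 0%N)] (w c) == Some 0%N) (b := 0%N) ltac:(by rewrite /= hw0 orig_cons eqxx) (leq0n N).
  by rewrite leqn0 => /eqP.
have [hr _] := hw1 (a := b.+1) ltac:(lia).
by rewrite eq_sym (negbTE hr).
Qed.

Lemma comm_FG psi : forall x y a, x != y ->
  FF x (FF y a) = FF y (FF x a) /\ FF x (GF psi y a) = GF psi y (FF x a)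
  /\ GF psi x (FF y a) = FF y (GF psi x a) /\ GF psi x (GF psi y a) = GF psi y (GF psi x a).
Proof. by move=> x y a hxy; rewrite /FF /GF; split; [|split; [|split]]; apply: updc_comm. Qed.

Lemma comm_GA psi : forall x y a, x != y ->
  GF psi x (GF psi y a) = GF psi y (GF psi x a) /\ GF psi x (GA psi y a) = GA psi y (GF psi x a)
  /\ GA psi x (GF psi y a) = GF psi y (GA psi x a) /\ GA psi x (GA psi y a) = GA psi y (GA psi x a).
Proof. by move=> x y a hxy; rewrite /GA /GF; split; [|split; [|split]]; apply: updc_comm. Qed.

Lemma step_Kd (R : realType) (alpha beta : R) (s : state V) (G : (nat -> option nat) -> R) :
  InvS s ->
  dexp (step alpha beta r p ch rk s) (fun s' => G (Psi s'.1)) = dexp (Kd alpha beta N (Psi s.1)) G.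
Proof.
case: s => S s2 hS.
have hS' := hS; case: hS' => h0 hv.
set psi := Psi S.
have inner : forall acc, Jst s2 acc ->
   dexp (procA beta p S (undup [seq x.1 | x <- S & x.1 != r]) acc) (fun s' => G (Psi s'.1))
   = dexp (gfold beta (GF psi) (GA psi) (AI N psi) (Phi s2 S acc.1))
          (fun phi' => dexp (dret R (canon N phi')) G).
  move=> acc hJ; rewrite procA_eq.
  rewrite (@gfold_transport _ _ _ _ beta (gFv S) (gAv S) (FV (GF psi)) (FV (GA psi))
             (fun a => Phi s2 S a.1) (Jst s2) (fun s' => G (Psi s'.1))
             (fun phi' => dexp (dret R (canon N phi')) G)) //.
  - exact: (reduce beta _ _ (comm_GA psi) (perm_A S)).
  - move=> v a ha; have [h1 h2] := trans_gF v hS ha; have [h3 h4] := trans_gA v hS ha; by [].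
  - by move=> a _; rewrite dexp_ret (psi_canon s2 S).
rewrite /step /= procF_eq dexp_bind /Kd dexp_bind.
rewrite (@gfold_transport _ _ _ _ alpha fFv (gFv S) (FV FF) (FV (GF psi))
          (fun a => Phi s2 S a.1) (Jst s2)
          (fun acc => dexp (procA beta p S (undup [seq x.1 | x <- S & x.1 != r]) acc) (fun s' => G (Psi s'.1)))
          (fun phi => dexp (gfold beta (GF psi) (GA psi) (AI N psi) phi)
                          (fun phi' => dexp (dret R (canon N phi')) G))).
- rewrite /= Phi_init // (reduce alpha _ _ (comm_FG psi) (perm_fr S)); apply: dexp_eq_supp => x _; by rewrite dexp_bind.
- move=> v a ha; have [h1 h2] := trans_fF S v ha; have [h3 h4] := trans_gF v hS ha; by [].
- move=> a ha; rewrite inner //.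
- split; first by rewrite /= orig_cons eqxx.
  split => //= u x; rewrite orig_cons /orig /=; case: ifP => // _ [<-].
  by have := hv _ _ h0.
Qed.

Lemma step_inv (R : realType) (alpha beta : R) (s : state V) : InvS s ->
  forall s', List.In s' (supp (step alpha beta r p ch rk s)) -> InvS s'.
Proof.
case: s => S s2 hS; have hS' := hS; case: hS' => h0 hv.
move=> s' hs'; have [acc [hacc hs'']] := supp_bind hs'.
rewrite procF_eq in hacc; rewrite procA_eq in hs''.
have hJ0 : Jst s2 ([:: (r, 0%N)], s2).
  split; first by rewrite /= orig_cons eqxx.
  split => //= u x; rewrite orig_cons /orig /=; case: ifP => // _ [<-].
  by have := hv _ _ h0.
have hJ : Jst s2 acc.
  apply: (gfold_inv (Inv := Jst s2) _ hJ0 hacc).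
  move=> v a ha; have [h1 _] := trans_fF S v ha; have [h3 _] := trans_gF v hS ha; by [].
have hJ' : Jst s2 s'.
  apply: (gfold_inv (Inv := Jst s2) _ hJ hs'').
  move=> v a ha; have [h1 _] := trans_gF v hS ha; have [h3 _] := trans_gA v hS ha; by [].
by case: hJ' => [a [b _]].
Qed.

Lemma proc_Q (R : realType) (alpha beta : R) t :
  (forall s, List.In s (supp (proc alpha beta r p ch rk t)) -> InvS s) /\
  forall G, dexp (proc alpha beta r p ch rk t) (fun s => G (Psi s.1)) = dexp (Q alpha beta N t) G.
Proof.
elim: t => [|t [IH1 IH2]].
  split.
    move=> s /= [<-|//]; split; first by rewrite /= orig_cons eqxx.
    by move=> u x /=; rewrite orig_cons /orig /=; case: ifP => // _ [<-].
  by move=> G; rewrite /proc /Q /= /init !dexp_ret /= Psi_init.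
have eP : proc alpha beta r p ch rk t.+1 = dbind (proc alpha beta r p ch rk t) (step alpha beta r p ch rk).
  by rewrite /proc iterS.
split.
  move=> s; rewrite eP => hs; have [x [hx hs']] := supp_bind hs.
  exact: (step_inv (IH1 _ hx) hs').
move=> G; rewrite eP dexp_bind.
rewrite (dexp_eq_supp (H2 := fun s => (fun psi => dexp (Kd alpha beta N psi) G) (Psi s.1))); last first.
  by move=> x hx; apply: step_Kd; apply: IH1.
by rewrite (IH2 (fun psi => dexp (Kd alpha beta N psi) G)) /Q iterS dexp_bind.
Qed.

End Struct.

Unset Implicit Arguments.
Set Strict Implicit.
Local Open Scope ring_scope.

Lemma dprob_dexp (R : realType) (S : Type) (d : dist R S) (E : pred S) :
  dprob d E = dexp d (fun x => (E x)%:R).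
Proof.
rewrite /dprob /dexp big_mkcond /=; apply: eq_bigr => i _.
by case: (E i.2); rewrite ?mulr1 ?mulr0.
Qed.

Lemma le_m_mono m a b : (a <= b)%N -> le_m m b -> le_m m a.
Proof. by case: m => //= n hab hb; lia. Qed.

Lemma pv_val m a : le_m m a -> val (pv m a) = a.
Proof. by move=> h; rewrite /pv insubdK. Qed.

Theorem mainTheorem4 (R : realType) (alpha beta : R)
  (halpha : 0 <= alpha <= 1) (hbeta : 0 <= beta <= 1)
  (V : eqType) (nbrs : V -> seq V) (r : V) (p : V -> V)
  (hund : undirected nbrs) (hconn : connected nbrs)
  (hT : bfs_tree nbrs r p)
  (rk : V -> nat) (hrk : injective rk)
  (m : option nat) (w : nat -> V)
  (hw0 : w 0%N = r)
  (hw : forall j, le_m m j.+1 -> w j.+1 != r /\ p (w j.+1) = w j)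
  (t j j' : nat) (ht : (0 < t)%N) (hjj : (j < j')%N) (hj' : le_m m j') :
  prob_same_origin alpha beta r p (tch nbrs r p) rk t (w j) (w j')
  = prob_same_origin alpha beta (proot m) (@ppar m) (@pch m) (@prk m) t
      (pv m j) (pv m j').
Proof.
have hjN : (j <= j')%N by lia.
set G := fun psi : nat -> option nat => ((psi j == psi j')%:R : R).
have hw1 : forall a, (0 < a <= j')%N -> w a != r /\ p (w a) = w a.-1.
  move=> a ha; case: a ha => // a ha; apply: hw; apply: (@le_m_mono m _ j') => //; lia.
have hch : forall a, (0 < a <= j')%N -> w a \in tch nbrs r p (w a.-1).
  move=> a ha; have [h1 h2] := hw1 a ha.
  rewrite /tch mem_filter mem_undup h1 h2 eqxx /= hund -h2.
  by case: hT => hT1 _; apply: hT1.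
have hch2 : forall x v, v \in tch nbrs r p x -> v != r /\ p v = x.
  by move=> x v; rewrite /tch mem_filter => /andP [/andP [h1 /eqP h2] _].
have [_ QT] := proc_Q rk hw0 hw1 hch hch2 alpha beta t.
have pw0 : pv m 0 = proot m by apply: val_inj; rewrite pv_val ?le_m0.
have pw1 : forall a, (0 < a <= j')%N -> pv m a != proot m /\ ppar (pv m a) = pv m a.-1.
  move=> a ha; have hm : le_m m a by apply: (@le_m_mono m _ j') => //; lia.
  split; first by apply/eqP => /(congr1 val); rewrite pv_val //=; lia.
  by rewrite /ppar pv_val.
have pch1 : forall a, (0 < a <= j')%N -> pv m a \in pch (pv m a.-1).
  move=> a ha; have hm : le_m m a by apply: (@le_m_mono m _ j') => //; lia.
  have hm' : le_m m a.-1 by apply: (@le_m_mono m _ a) => //; lia.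
  rewrite /pch pv_val // (_ : a.-1.+1 = a); last by lia.
  by rewrite hm mem_seq1.
have pch2 : forall x v, v \in pch x -> v != proot m /\ ppar v = x.
  move=> x v; rewrite /pch; case: ifP => // hx; rewrite mem_seq1 => /eqP ->.
  split; first by apply/eqP => /(congr1 val); rewrite pv_val.
  by rewrite /ppar pv_val //= /pv valKd.
have [_ QP] := proc_Q (@prk m) pw0 pw1 pch1 pch2 alpha beta t.
rewrite /prob_same_origin !dprob_dexp.
transitivity (dexp (Q alpha beta j' t) G).
  rewrite -QT; apply: dexp_eq_supp => s _; by rewrite /G (Psi_eq w s.1 hjN (leqnn j')).
rewrite -QP; apply: dexp_eq_supp => s _; by rewrite /G (Psi_eq (pv m) s.1 hjN (leqnn j')).
Qed.
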